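(* Let $p\ge2$, $A\in\mathcal{B}_I(p)$ with common between-group parameter $c$, let $\alpha_k=\frac1{n_k}+\frac{n_k-1}{n_k}b_k$ and $\alpha^\star=\min_{1\le k\le p}\alpha_k$. If $0<\alpha_k<1$ for all $k\in\{1,\dots,p\}$ and $-\frac{\alpha^\star}{p-1}<c<\alpha^\star$, then $A\succ 0$.
   Context: All matrices are real; $\succ 0$ means positive definite. $J_m$ is the $m\times m$ matrix of ones, $J_{m,q}=\mathbf 1_m\mathbf 1_q^\top$. For $n_1,\dots,n_p\ge1$, $n=\sum n_k$, $\mathcal{B}_I(p)$ is the set of symmetric $n\times n$ block matrices $A=(A_{k,\ell})$ (block $A_{k,\ell}$ of size $n_k\times n_\ell$) with diagonal blocks $A_{k,k}=(1-b_k)I_{n_k}+b_kJ_{n_k}$ and off-diagonal blocks $A_{k,\ell}=cJ_{n_k,n_\ell}$ ($k\ne\ell$), where $b_k,c\in]-1,1[$ and $b_k=0$ if $n_k=1$. *)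

(* Defs.v *)
From HB Require Import structures.
From mathcomp Require Import all_boot all_order all_algebra.
Set Implicit Arguments. Unset Strict Implicit. Unset Printing Implicit Defensive.
Import Order.TTheory GRing.Theory Num.Theory.
Local Open Scope ring_scope.

Definition posdef (R : realFieldType) (N : nat) (A : 'M[R]_N) : Prop :=
  A^T = A /\ forall x : 'cV[R]_N, x != 0 -> 0 < (x^T *m A *m x) 0 0.

(* The block matrix of B_I(p): block (k,l) is of size n_k x n_l;
   diagonal block (k,k) = (1 - b_k) I + b_k J, off-diagonal block = c J. *)
Definition BI_block (R : realFieldType) (p : nat) (n : 'I_p -> nat)
  (b : 'I_p -> R) (c : R) (k l : 'I_p) : 'M[R]_(n k, n l) :=
  \matrix_(i, j) (if k == l then
                    (1 - b k) * (if (i : nat) == (j : nat) then 1 else 0) + b k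
                  else c).

Definition BI_matrix (R : realFieldType) (p : nat) (n : 'I_p -> nat)
  (b : 'I_p -> R) (c : R) : 'M[R]_(\sum_(k < p) n k) :=
  mxblock (BI_block n b c).

Definition alpha (R : realFieldType) (p : nat) (n : 'I_p -> nat) (b : 'I_p -> R)
  (k : 'I_p) : R :=
  1 / (n k)%:R + ((n k)%:R - 1) / (n k)%:R * b k.

(* minimum of a family over 'I_p (meaningful for p >= 1) *)
Definition min_over (R : realFieldType) (p : nat) (a : 'I_p -> R) : R :=
  let s := [seq a k | k <- enum 'I_p] in
  \big[Num.min/head 0 s]_(x <- s) x.

(* Main.v *)
Require Import Defs.
From HB Require Import structures.
From mathcomp Require Import all_boot all_order all_algebra.
From mathcomp Require Import ring lra.
Import Order.TTheory GRing.Theory Num.Theory.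
Local Open Scope ring_scope.
Set Implicit Arguments.

Section S.
Variable R : realFieldType.
Lemma cs m (f : 'I_m -> R) : (\sum_i f i)^+2 <= m%:R * \sum_i f i ^+ 2.
Proof.
have H : 0 <= \sum_i \sum_j (f i - f j)^+2.
  by apply: sumr_ge0 => i _; apply: sumr_ge0 => j _; apply: sqr_ge0.
have E : \sum_i \sum_j (f i - f j)^+2 =
   \sum_i \sum_(j < m) f i ^+2 + \sum_(i < m) \sum_j f j ^+2 - 2 * (\sum_i \sum_j f i * f j).
  rewrite mulr_sumr -big_split -sumrB /=; apply: eq_bigr => i _.
  rewrite mulr_sumr -big_split -sumrB /=; apply: eq_bigr => j _; ring.
have E2 : (\sum_i f i)^+2 = \sum_i \sum_j f i * f j.
  by rewrite expr2 mulr_suml; apply: eq_bigr => i _; rewrite mulr_sumr.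
have E3 : \sum_i \sum_(j < m) f i ^+2 = m%:R * \sum_i f i ^+ 2.
  rewrite mulr_sumr; apply: eq_bigr => i _; rewrite sumr_const card_ord mulr_natl //.
have E4 : \sum_(i < m) \sum_j f j ^+2 = m%:R * \sum_i f i ^+ 2.
  by rewrite sumr_const card_ord mulr_natl.
rewrite E3 E4 -E2 in E; rewrite E in H; lra.
Qed.
Lemma quad_entry m k (u : 'cV[R]_m) (v : 'cV[R]_k) (M : 'M[R]_(m,k)) :
  (u^T *m M *m v) 0 0 = \sum_i \sum_j u i 0 * M i j * v j 0.
Proof.
rewrite mxE exchange_big /=; apply: eq_bigr => j _.
rewrite mxE big_distrl /=; apply: eq_bigr => i _; rewrite !mxE.
done.
Qed.

Lemma sq_pos m (u : 'cV[R]_m) : u != 0 -> 0 < \sum_i u i 0 ^+ 2.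
Proof.
move=> hu.
case: (pickP (fun i => u i 0 != 0)) => [i Hi | H].
  rewrite (bigD1 i) //=; apply: ltr_pwDl.
    by rewrite lt_def sqr_ge0 andbT expf_neq0.
  by apply: sumr_ge0 => j _; apply: sqr_ge0.
case/negP: hu; apply/eqP/matrixP => i j; rewrite (ord1 j) mxE.
by move: (H i) => /= /negbFE/eqP.
Qed.
Lemma blk_off p (n : 'I_p -> nat) (b : 'I_p -> R) c k l (u : 'cV[R]_(n k)) (v : 'cV[R]_(n l)) :
  k != l -> (u^T *m BI_block n b c k l *m v) 0 0 = c * (\sum_i u i 0) * (\sum_j v j 0).
Proof.
move=> kl; rewrite quad_entry -mulrA mulr_suml mulr_sumr; apply: eq_bigr => i _.
rewrite !mulr_sumr; apply: eq_bigr => j _; rewrite mxE (negbTE kl); ring.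
Qed.

Lemma blk_diag p (n : 'I_p -> nat) (b : 'I_p -> R) c k (u v : 'cV[R]_(n k)) :
  (u^T *m BI_block n b c k k *m v) 0 0 =
  (1 - b k) * (\sum_i u i 0 * v i 0) + b k * (\sum_i u i 0) * (\sum_j v j 0).
Proof.
rewrite quad_entry.
have E1 : \sum_i \sum_j u i 0 * BI_block n b c k k i j * v j 0 =
  \sum_i \sum_(j < n k) ((1 - b k) * (u i 0 * (if (i:nat) == (j:nat) then 1 else 0) * v j 0)
                 + b k * (u i 0 * v j 0)).
  apply: eq_bigr => i _; apply: eq_bigr => j _; rewrite mxE eqxx; case: ((i:nat) == j); ring.
have E2 : forall i : 'I_(n k), \sum_(j < n k) u i 0 * (if (i:nat) == (j:nat) then 1 else 0) * v j 0 = u i 0 * v i 0.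
  move=> i; rewrite (bigD1 i) //= eqxx big1 ?addr0 ?mulr1 // => j ji.
  have -> : ((i : nat) == (j : nat)) = false by apply/negbTE; rewrite eq_sym.
  by rewrite mulr0 mul0r.
rewrite E1; under eq_bigr => i _ do rewrite big_split /= -!mulr_sumr E2.
rewrite big_split /= -!mulr_sumr -mulrA mulr_suml; congr (_ + _); congr (_ * _).
Qed.

Lemma min_over_le p (a : 'I_p -> R) k : min_over a <= a k.
Proof.
rewrite /min_over /=.
have : a k \in [seq a k | k <- enum 'I_p] by apply: map_f; rewrite mem_enum.
elim: [seq a k | k <- enum 'I_p] (head 0 _) => // x s IH h.
rewrite in_cons big_cons => /orP [/eqP -> | ys].
  by rewrite ge_min lexx.
by rewrite ge_min (IH h ys) orbT.
Qed.

Lemma term_pos (nn N s b al c e t : R) :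
  0 < nn -> 0 < 1 - b -> s ^+ 2 <= nn * N -> 0 < al - c + e -> 0 <= N ->
  nn * t = (1 - b) * (nn * N - s ^+ 2) + nn * (al - c + e) * s ^+ 2 ->
  t = (1 - b) * N + (b - c + e) * s ^+ 2 ->
  0 <= t /\ (0 < N -> 0 < t).
Proof.
move=> hnn hb hs ha hN E Et.
have h1 : 0 <= (1 - b) * (nn * N - s ^+ 2) by apply: mulr_ge0; lra.
have h2 : 0 <= nn * (al - c + e) * s ^+ 2.
  by apply: mulr_ge0; [apply: mulr_ge0; lra | apply: sqr_ge0].
have ht : 0 <= t.
  have : 0 <= nn * t by lra.
  by rewrite pmulr_rge0.
split => // hN0.
have [s0|s0] := eqVneq s 0.
  rewrite Et s0 expr0n /= mulr0 addr0; exact: mulr_gt0.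
have h3 : 0 < nn * (al - c + e) * s ^+ 2.
  apply: mulr_gt0; first (apply: mulr_gt0; lra).
  by rewrite lt_def sqr_ge0 andbT expf_neq0.
have : 0 < nn * t by lra.
by rewrite pmulr_rgt0.
Qed.
End S.
Theorem corollary2 (R : realFieldType) (p : nat) (n : 'I_p -> nat)
  (b : 'I_p -> R) (c : R)
  (hp : (2 <= p)%N)
  (hn : forall k, (1 <= n k)%N)
  (hb : forall k, -1 < b k < 1)
  (hb1 : forall k, n k = 1%N -> b k = 0)
  (hc : -1 < c < 1)
  (halpha : forall k, 0 < alpha n b k < 1)
  (hcl : - (min_over (alpha n b)) / (p.-1)%:R < c)
  (hcu : c < min_over (alpha n b)) :
  posdef (BI_matrix n b c).
Proof.
split.
  rewrite /BI_matrix tr_mxblock; apply: eq_mxblock => k l; apply/matrixP => i j.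
  rewrite !mxE [l == k]eq_sym; case: eqP => [kl|//]; subst l.
  by rewrite [(j : nat) == i]eq_sym.
move=> x x0.
pose xk k := submxcol x k.
have Ex : x = \mxcol_k xk k by rewrite submxcolK.
pose s k := \sum_i xk k i 0.
pose N k := \sum_i xk k i 0 ^+ 2.
pose S := \sum_k s k.
have Q : (x^T *m BI_matrix n b c *m x) 0 0 =
    \sum_k ((1 - b k) * N k + (b k - c) * s k ^+ 2) + c * S ^+ 2.
  rewrite Ex tr_mxcol /BI_matrix mul_mxrow_mxblock mul_mxrow_mxcol summxE.
  under eq_bigr => l _ do rewrite mulmx_suml summxE.
  rewrite exchange_big /=.
  have -> : c * S ^+ 2 = \sum_k c * s k * S.
    by rewrite expr2 mulr_suml mulr_sumr; apply: eq_bigr => k _; rewrite mulrA.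
  rewrite -big_split /=; apply: eq_bigr => k _.
  rewrite (bigD1 k) //= blk_diag.
  under eq_bigr => l kl.
    rewrite blk_off; last by rewrite eq_sym.
    rewrite -mulrA.
    over.
  rewrite -mulr_sumr -mulr_sumr.
  have -> : \sum_(l < p | l != k) s l = S - s k.
    by rewrite /S [in RHS](bigD1 k) //=; ring.
  have -> : N k = \sum_i xk k i 0 * xk k i 0 by apply: eq_bigr => i _; rewrite expr2.
  rewrite /s /=; ring.
rewrite Q.
set m := min_over (alpha n b) in hcl hcu *.
have hm : forall k, m <= alpha n b k := fun k => @min_over_le R p (alpha n b) k.
have hp1 : 0 < (p.-1)%:R :> R by rewrite ltr0n -subn1 subn_gt0.
have hpR : p%:R = (p.-1)%:R + 1 :> R by rewrite natr1 prednK // ltnW.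
have hmc : 0 < m + (p.-1)%:R * c.
  move: hcl; rewrite ltr_pdivrMr // -/m => h; lra.
pose e := if 0 <= c then 0 else c * p%:R.
have he : forall k, 0 < alpha n b k - c + e.
  move=> k; have := hm k; rewrite /e; case: ifP => hc0 hk; first lra.
  rewrite hpR; lra.
have hcs : S ^+ 2 <= p%:R * \sum_k s k ^+ 2 := @cs R p s.
have hcS : e * \sum_k s k ^+ 2 <= c * S ^+ 2.
  rewrite /e; case: ifP => hc0.
    by rewrite mul0r; apply: mulr_ge0 => //; apply: sqr_ge0.
  have hc1 : c < 0 by rewrite ltNge hc0.
  nra.
pose t k := (1 - b k) * N k + (b k - c + e) * s k ^+ 2.
have Et : \sum_k t k = \sum_k ((1 - b k) * N k + (b k - c) * s k ^+ 2) + e * \sum_k s k ^+ 2.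
  by rewrite mulr_sumr -big_split; apply: eq_bigr => k _ /=; rewrite /t; ring.
have ht : forall k, 0 <= t k /\ (xk k != 0 -> 0 < t k).
  move=> k.
  have hnk : 0 < (n k)%:R :> R by rewrite ltr0n hn.
  have hbk : 0 < 1 - b k by case/andP: (hb k) => _ ?; lra.
  have hN : 0 <= N k by apply: sumr_ge0 => i _; apply: sqr_ge0.
  have hsN : s k ^+ 2 <= (n k)%:R * N k := @cs R (n k) (fun i => xk k i 0).
  have E : (n k)%:R * t k = (1 - b k) * ((n k)%:R * N k - s k ^+ 2)
            + (n k)%:R * (alpha n b k - c + e) * s k ^+ 2.
    rewrite /t /alpha; field; by rewrite lt0r_neq0.
  have [h1 h2] := @term_pos R _ _ _ _ _ _ _ _ hnk hbk hsN (he k) hN E erefl.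
  split => // /sq_pos; exact: h2.
have hpos : 0 < \sum_k t k.
  case: (pickP (fun k => xk k != 0)) => [k0 hk0 | H].
    rewrite (bigD1 k0) //=; apply: ltr_pwDl; first exact: (proj2 (ht k0)).
    by apply: sumr_ge0 => k _; exact: (proj1 (ht k)).
  case/negP: x0; rewrite Ex; apply/eqP.
  rewrite -(mxcol0 (V := R) (p_ := n) 1).
  by apply: eq_mxcol => k; apply/eqP; exact: negbFE (H k).
lra.
Qed.
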